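(* For $k\in\{2,3\}$, the graph $BT(k)$ lies in $\mathcal{G}(2k+1,3)$ and \[ \rho_3(BT(k))=\frac{(k+1)(k^2+1)}{3k+2}>\rho_3\big(T(3k+1,3)\big); \] in particular $f_3(2k+1,3)>\rho_3(T(3k+1,3))$.
   Context: $\mathcal{G}(\Delta,\omega)$ denotes the class of finite simple graphs $G$ with maximum degree $\Delta(G)\le\Delta$ and clique number $\omega(G)\le\omega$. $k_t(G)$ is the number of copies of $K_t$ in $G$ and $\rho_t(G)=k_t(G)/|V(G)|$. $f_t(\Delta,\omega)=\sup\{\rho_t(G): G\in\mathcal{G}(\Delta,\omega),\ |V(G)|\ge 1\}$. $T(n,r)$ denotes the $r$-partite Turán graph on $n$ vertices (complete $r$-partite, part sizes as equal as possible). For $k\ge2$, $\widetilde{BT}(k)$ is obtained from the complete bipartite graph $K_{k,k}$ by deleting one edge $xy$ and adding a new vertex adjacent exactly to $x$ and $y$; then $BT(k)=\widetilde{BT}(k)\vee I_{k+1}$ is the join of $\widetilde{BT}(k)$ with an independent set of $k+1$ new vertices (every vertex of $\widetilde{BT}(k)$ adjacent to every vertex of $I_{k+1}$). $BT(k)$ has $3k+2$ vertices. *)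

(* Defs.v *)
From mathcomp Require Import all_boot all_order all_algebra.
Set Implicit Arguments. Unset Strict Implicit. Unset Printing Implicit Defensive.
Import Order.TTheory GRing.Theory Num.Theory.

Section Graphs.
Variable T : finType.
Implicit Type e : rel T.

Definition simple_graph e : bool :=
  [forall x, ~~ e x x] && [forall x, forall y, e x y == e y x].

Definition nbhd e (x : T) : {set T} := [set y | e x y].
Definition maxdeg_le e (D : nat) : bool := [forall x, #|nbhd e x| <= D].

Definition is_clique e (S : {set T}) : bool :=
  [forall x in S, forall y in S, (x != y) ==> e x y].
Definition clique_num_le e (w : nat) : bool :=
  [forall S : {set T}, is_clique e S ==> (#|S| <= w)].

Definition in_G e (D w : nat) : bool :=
  [&& simple_graph e, maxdeg_le e D & clique_num_le e w].

Definition kt e (t : nat) : nat :=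
  #|[set S : {set T} | (#|S| == t) && is_clique e S]|.

Definition rho e (t : nat) : rat := (kt e t)%:R / (#|T|)%:R.
End Graphs.

(* Turan graph T(n,r): vertex i in part (i mod r); complete r-partite,
   part sizes as equal as possible. *)
Definition turan (n r : nat) : rel 'I_n :=
  fun i j => (i %% r)%N != (j %% r)%N.

(* BT(k) on vertices 0..3k+1:
   A = {0..k-1}, B = {k..2k-1} (the K_{k,k}), x = 0, y = k (deleted edge xy),
   z = 2k the new vertex adjacent to x and y, I = {2k+1..3k+1} the independent
   set of k+1 vertices joined to everything in {0..2k}. *)
Definition bt_half (k i j : nat) : bool :=
  [|| [&& i < k, k <= j, j < 2 * k & ~~ ((i == 0) && (j == k))],
      (j == 2 * k) && ((i == 0) || (i == k))
    | (i <= 2 * k) && (2 * k < j)].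

Definition BT (k : nat) : rel 'I_(3 * k + 2) :=
  fun i j => bt_half k i j || bt_half k j i.

Arguments BT k : clear implicits.
Arguments turan n r : clear implicits.

(* Main.v *)
Require Import Defs.
From mathcomp Require Import all_boot all_order all_algebra.
From mathcomp Require Import zify.
Import Order.TTheory GRing.Theory Num.Theory.

Lemma card1_sum n (P : nat -> bool) :
  #|[set y : 'I_n | P y]| = \sum_(0 <= i < n) P i.
Proof.
rewrite -sum1_card big_mkcond big_mkord /=.
by apply: eq_bigr => i _; rewrite inE; case: (P i).
Qed.

Lemma card3_sum n (P : nat -> nat -> nat -> bool) :
  #|[set t : 'I_n * 'I_n * 'I_n | P t.1.1 t.1.2 t.2]| =
  \sum_(0 <= a < n) \sum_(0 <= b < n) \sum_(0 <= c < n) P a b c.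
Proof.
rewrite big_mkord.
under eq_bigr => a _ do rewrite big_mkord.
under eq_bigr => a _ do under eq_bigr => b _ do rewrite big_mkord.
rewrite pair_bigA pair_bigA -sum1_card big_mkcond /=.
by apply: eq_bigr => q _; rewrite inE; case: (P _ _ _).
Qed.

Lemma all_iota_ord n (P : nat -> bool) :
  all P (iota 0 n) -> forall i : 'I_n, P i.
Proof. by move=> /allP H i; apply: H; rewrite mem_iota /= add0n ltn_ord. Qed.

Lemma clique4 (T : finType) (e : rel T) (S : {set T}) :
  is_clique e S -> 3 < #|S| ->
  exists a b c d, [&& e a b, e a c, e a d, e b c, e b d & e c d].
Proof.
move=> /forallP cl; rewrite cardE.
have U := enum_uniq (pred_of_set S).
have M := mem_enum (pred_of_set S).
case E: (enum S) U M => [|a [|b [|c [|d s]]]] //= U M _.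
have In : forall x, x \in [:: a, b, c, d & s] -> x \in S by move=> x; rewrite -M.
have ee : forall x y, x \in [:: a, b, c, d & s] -> y \in [:: a, b, c, d & s] -> x != y -> e x y.
  move=> x y /In Hx /In Hy nxy.
  by move: (cl x); rewrite Hx /= => /forallP /(_ y); rewrite Hy nxy.
move: U; rewrite !inE !negb_or => /and5P [/and4P [Hab Hac Had _] /and3P [Hbc Hbd _] /andP [Hcd _] _ _].
exists a, b, c, d.
by rewrite !ee ?inE ?eqxx ?orbT.
Qed.

Lemma mem3 n (w a b c : 'I_n) : w \in [set a; b; c] ->
  [\/ w = a :> nat, w = b :> nat | w = c :> nat].
Proof. rewrite !inE => /orP [/orP [] | ] /eqP ->; [apply: Or31|apply: Or32|apply: Or33]; done. Qed.

Arguments mem3 {n w a b c}.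

Lemma kt3 n (e : rel 'I_n) (f : nat -> nat -> bool)
  (he : forall i j : 'I_n, e i j = f i j) (fs : forall a b, f a b = f b a) :
  kt e 3 = \sum_(0 <= a < n) \sum_(0 <= b < n) \sum_(0 <= c < n)
             [&& a < b, b < c, f a b, f a c & f b c].
Proof.
rewrite -card3_sum /kt.
set D := [set t : 'I_n * 'I_n * 'I_n | _].
rewrite -(card_in_imset (D := D) (f := fun t => [set t.1.1; t.1.2; t.2])).
  apply: eq_card => S. rewrite inE.
  apply/andP/imsetP.
    case=> /eqP c3 cl.
    have U := Order.enum_uniq (pred_of_set S).
    have M := Order.mem_enum (pred_of_set S).
    have Sz := Order.cardE (pred_of_set S).
    have So : sorted <=%O (Order.enum (pred_of_set S)) by apply: sort_sorted; exact: le_total.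
    move: U M Sz So.
    case: (Order.enum (pred_of_set S)) => [|x [|y [|z [|w s]]]] //=; rewrite ?c3 // => U M _.
    rewrite andbT => /andP [lxy lyz].
    move: U; rewrite !inE !negb_or andbT => /andP [/andP [nxy nxz] nyz].
    have exy : x < y by rewrite ltn_neqAle; rewrite -val_eqE in nxy; rewrite nxy.
    have eyz : y < z by rewrite ltn_neqAle; rewrite -val_eqE in nyz; rewrite nyz.
    have In : forall v, v \in [:: x; y; z] -> v \in S by move=> v; rewrite -M.
    have ee : forall u v, u \in [:: x; y; z] -> v \in [:: x; y; z] -> u != v -> e u v.
      move=> u v /In Hu /In Hv nuv.
      by move/forallP: cl => /(_ u); rewrite Hu /= => /forallP /(_ v); rewrite Hv nuv.
    exists (x, y, z).
      rewrite inE /= exy eyz -!he !ee ?inE ?eqxx ?orbT //.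
    by rewrite /=; apply/setP => v; rewrite -M !inE orbA.
  case=> [[[a b] c]]; rewrite inE /= => /and5P [ab bc fab fac fbc] ->.
    have nab : a != b by rewrite -val_eqE /= neq_ltn ab.
    have nbc : b != c by rewrite -val_eqE /= neq_ltn bc.
    have nac : a != c by rewrite -val_eqE /= neq_ltn (ltn_trans ab bc).
    split.
      by rewrite -setUA cardsU1 cards2 !inE negb_or nab nac nbc.
    apply/forallP => x; apply/implyP => Hx; apply/forallP=> y; apply/implyP => Hy.
    apply/implyP => nxy.
    move: Hx Hy nxy; rewrite !inE => /orP [/orP [] | ] /eqP -> /orP [/orP [] | ] /eqP -> nxy;
      rewrite ?eqxx // in nxy; rewrite he;
      first [by rewrite ?fab ?fac ?fbc | by rewrite fs ?fab ?fac ?fbc].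
move=> [[a b] c] [[a' b'] c']; rewrite !inE /= => /and5P [ab bc _ _ _] /and5P [ab' bc' _ _ _] Heq.
have H w : (w \in [set a; b; c]) = (w \in [set a'; b'; c']) by rewrite Heq.
have Ia : a \in [set a'; b'; c'] by rewrite -H !inE eqxx.
have Ib : b \in [set a'; b'; c'] by rewrite -H !inE eqxx orbT.
have Ic : c \in [set a'; b'; c'] by rewrite -H !inE eqxx !orbT.
have Ia' : a' \in [set a; b; c] by rewrite H !inE eqxx.
have Ic' : c' \in [set a; b; c] by rewrite H !inE eqxx !orbT.
have ea : a = a' :> nat.
  by case: (mem3 Ia) => ?; case: (mem3 Ia') => ?; lia.
have ec : c = c' :> nat.
  by case: (mem3 Ic) => ?; case: (mem3 Ic') => ?; lia.
have eb : b = b' :> nat by case: (mem3 Ib) => ?; lia.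
by rewrite (val_inj ea) (val_inj eb) (val_inj ec).
Qed.

Arguments all_iota_ord {n P}.
Arguments clique4 {T e S}.

Lemma inG_of n (e : rel 'I_n) (f : nat -> nat -> bool) (D : nat)
  (he : forall i j : 'I_n, e i j = f i j) (fs : forall a b, f a b = f b a)
  (firr : all (fun a => ~~ f a a) (iota 0 n))
  (fdeg : all (fun x => \sum_(0 <= i < n) f x i <= D) (iota 0 n))
  (f4 : all (fun a => all (fun b => all (fun c => all (fun d =>
           ~~ [&& f a b, f a c, f a d, f b c, f b d & f c d]) (iota 0 n)) (iota 0 n)) (iota 0 n)) (iota 0 n)) :
  in_G e D 3.
Proof.
apply/and3P; split.
- apply/andP; split.
    by apply/forallP => x; rewrite he; exact: (all_iota_ord firr x).
  by apply/forallP => x; apply/forallP => y; rewrite !he fs.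
- apply/forallP => x; rewrite /nbhd.
  have -> : [set y | e x y] = [set y : 'I_n | f x y] by apply/setP => y; rewrite !inE he.
  by rewrite card1_sum; exact: (all_iota_ord fdeg x).
- apply/forallP => S; apply/implyP => cl; rewrite leqNgt; apply/negP => H4.
  have [a [b [c [d]]]] := clique4 cl H4.
  rewrite !he.
  have := all_iota_ord f4 a; move/allP/(_ b); rewrite mem_iota add0n ltn_ord => /(_ isT).
  move/allP/(_ c); rewrite mem_iota add0n ltn_ord => /(_ isT).
  move/allP/(_ d); rewrite mem_iota add0n ltn_ord => /(_ isT).
  by move=> /negP.
Qed.

Definition fb k (a b : nat) := bt_half k a b || bt_half k b a.
Definition ft (a b : nat) := (a %% 3)%N != (b %% 3)%N.

Lemma fb_sym k a b : fb k a b = fb k b a. Proof. by rewrite /fb orbC. Qed.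
Lemma ft_sym a b : ft a b = ft b a. Proof. by rewrite /ft eq_sym. Qed.

Local Open Scope ring_scope.

Lemma rhoE n (e : rel 'I_n) : rho e 3 = (kt e 3)%:R / n%:R.
Proof. by rewrite /rho card_ord. Qed.

Lemma case2 : [/\ in_G (BT 2) (2 * 2 + 1) 3,
      rho (BT 2) 3 = ((2 + 1) * (2 ^ 2 + 1))%:R / (3 * 2 + 2)%:R,
      rho (turan (3 * 2 + 1) 3) 3 < rho (BT 2) 3
    & exists (T : finType) (e : rel T),
        [/\ (0 < #|T|)%N, in_G e (2 * 2 + 1) 3 &
            rho (turan (3 * 2 + 1) 3) 3 < rho e 3]].
Proof.
have G : in_G (BT 2) (2 * 2 + 1) 3.
  apply: (inG_of _ _ (fb 2)) => //; try exact: fb_sym; rewrite unlock; by vm_compute.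
have K1 : kt (BT 2) 3 = 15%N.
  by rewrite (kt3 _ _ (fb 2)) //; [rewrite unlock; vm_compute | exact: fb_sym].
have K2 : kt (turan (3 * 2 + 1) 3) 3 = 12%N.
  by rewrite (kt3 _ _ ft) //; [rewrite unlock; vm_compute | exact: ft_sym].
have L : rho (turan (3 * 2 + 1) 3) 3 < rho (BT 2) 3.
  rewrite !rhoE K1 K2. by vm_compute.
split => //.
  by rewrite rhoE K1.
exists 'I_(3 * 2 + 2), (BT 2); split => //.
by rewrite card_ord.
Qed.

Lemma case3 : [/\ in_G (BT 3) (2 * 3 + 1) 3,
      rho (BT 3) 3 = ((3 + 1) * (3 ^ 2 + 1))%:R / (3 * 3 + 2)%:R,
      rho (turan (3 * 3 + 1) 3) 3 < rho (BT 3) 3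
    & exists (T : finType) (e : rel T),
        [/\ (0 < #|T|)%N, in_G e (2 * 3 + 1) 3 &
            rho (turan (3 * 3 + 1) 3) 3 < rho e 3]].
Proof.
have G : in_G (BT 3) (2 * 3 + 1) 3.
  apply: (inG_of _ _ (fb 3)) => //; try exact: fb_sym; rewrite unlock; by vm_compute.
have K1 : kt (BT 3) 3 = 40%N.
  by rewrite (kt3 _ _ (fb 3)) //; [rewrite unlock; vm_compute | exact: fb_sym].
have K2 : kt (turan (3 * 3 + 1) 3) 3 = 36%N.
  by rewrite (kt3 _ _ ft) //; [rewrite unlock; vm_compute | exact: ft_sym].
have L : rho (turan (3 * 3 + 1) 3) 3 < rho (BT 3) 3.
  rewrite !rhoE K1 K2. by vm_compute.
split => //.
  by rewrite rhoE K1.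
exists 'I_(3 * 3 + 2), (BT 3); split => //.
by rewrite card_ord.
Qed.

Theorem mainTheorem16 (k : nat) (hk : (k == 2)%N || (k == 3)%N) :
  [/\ in_G (BT k) (2 * k + 1) 3,
      rho (BT k) 3 = ((k + 1) * (k ^ 2 + 1))%:R / (3 * k + 2)%:R,
      rho (turan (3 * k + 1) 3) 3 < rho (BT k) 3
    & (* f_3(2k+1,3) > rho_3(T(3k+1,3)), i.e. the sup exceeds this value:
         some nonempty graph of G(2k+1,3) has larger triangle density *)
      exists (T : finType) (e : rel T),
        [/\ (0 < #|T|)%N, in_G e (2 * k + 1) 3 &
            rho (turan (3 * k + 1) 3) 3 < rho e 3]].
Proof. by case/orP: hk => /eqP ->; [exact: case2 | exact: case3]. Qed.
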